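(* Let $d\ge 1$ and let $\Sigma: M_d(\mathbb{C})\to M_d(\mathbb{C})$ be a general dynamical map, i.e. a linear map that is trace preserving and hermiticity preserving ($\Sigma(\rho^\dagger)=\Sigma(\rho)^\dagger$ for all $\rho$), but not necessarily positivity preserving. Then $\Sigma$ can be written as the weighted difference of two completely positive trace-preserving (CPTP) maps: there exist a real number $p>0$ and CPTP maps $\Lambda^*_+,\Lambda^*_-$ on $M_d(\mathbb{C})$ such that $$\Sigma=(1+p)\,\Lambda^*_+-p\,\Lambda^*_-.$$ Explicitly: there exist finite families of matrices $\{K_j\}_j,\{M_j\}_j\subset M_d(\mathbb{C})$ with $\Sigma(\rho)=\sum_j K_j\rho K_j^\dagger-\sum_j M_j\rho M_j^\dagger$ for all $\rho$, and for any such families and any $p>0$ with $\sum_j M_j^\dagger M_j\le p\,\mathbb{I}$, setting $D=\sqrt{p\,\mathbb{I}-\sum_j M_j^\dagger M_j}$ (positive semidefinite square root) and $$\Lambda^*_+(\rho)=\frac{\sum_j K_j\rho K_j^\dagger+D\rho D^\dagger}{1+p},\qquad \Lambda^*_-(\rho)=\frac{\sum_j M_j\rho M_j^\dagger+D\rho D^\dagger}{p},$$ the maps $\Lambda^*_\pm$ are completely positive and trace preserving and $\Sigma=(1+p)\Lambda^*_+-p\Lambda^*_-$.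
   Context: $M_d(\mathbb{C})$ denotes the complex $d\times d$ matrices, $\mathbb{I}$ the identity matrix, and $A\le B$ means $B-A$ is positive semidefinite. A linear map $\Lambda$ on $M_d(\mathbb{C})$ is completely positive (CP) iff it has a Kraus form $\Lambda(\rho)=\sum_j K_j\rho K_j^\dagger$; it is trace preserving iff $\mathrm{tr}\,\Lambda(\rho)=\mathrm{tr}\,\rho$ for all $\rho$. *)

(* Defs.v *)
From HB Require Import structures.
From mathcomp Require Import all_boot all_order all_algebra.
From mathcomp Require Import complex.
From mathcomp Require Import reals.
Set Implicit Arguments. Unset Strict Implicit. Unset Printing Implicit Defensive.
Import Order.TTheory GRing.Theory Num.Theory.
Local Open Scope ring_scope.

Section Defs.
Variable C : numClosedFieldType.

Definition adj (m n : nat) (A : 'M[C]_(m, n)) : 'M[C]_(n, m) :=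
  (map_mx Num.conj A)^T.

(* positive semidefinite: v^dagger A v >= 0 (real, nonnegative) for all v *)
Definition psd (d : nat) (A : 'M[C]_d) : Prop :=
  forall v : 'cV[C]_d, 0 <= (adj v *m A *m v) 0 0.

Definition loewner (d : nat) (A B : 'M[C]_d) : Prop := psd (B - A).

Definition kraus (d n : nat) (K : 'I_n -> 'M[C]_d) (rho : 'M[C]_d) : 'M[C]_d :=
  \sum_(j < n) K j *m rho *m adj (K j).

Definition is_linear_map (d : nat) (L : 'M[C]_d -> 'M[C]_d) : Prop :=
  forall (a : C) (x y : 'M[C]_d), L (a *: x + y) = a *: L x + L y.

Definition trace_preserving (d : nat) (L : 'M[C]_d -> 'M[C]_d) : Prop :=
  forall rho, \tr (L rho) = \tr rho.

Definition herm_preserving (d : nat) (L : 'M[C]_d -> 'M[C]_d) : Prop :=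
  forall rho, L (adj rho) = adj (L rho).

(* completely positive: has a (finite) Kraus form, as in the paper's convention *)
Definition completely_positive (d : nat) (L : 'M[C]_d -> 'M[C]_d) : Prop :=
  exists n (K : 'I_n -> 'M[C]_d), forall rho, L rho = kraus K rho.

Definition CPTP (d : nat) (L : 'M[C]_d -> 'M[C]_d) : Prop :=
  completely_positive L /\ trace_preserving L.

End Defs.

(* Main.v *)
Require Import Defs.
From HB Require Import structures.
From mathcomp Require Import all_boot all_order all_algebra.
From mathcomp Require Import complex.
From mathcomp Require Import reals.
From mathcomp Require Import spectral.
From mathcomp Require Import ring lra.
Import Order.TTheory GRing.Theory Num.Theory.
Set Implicit Arguments. Unset Strict Implicit. Unset Printing Implicit Defensive.
Local Open Scope ring_scope.

Section Gen.
Variable C : numClosedFieldType.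
Implicit Types (d m n : nat).

Lemma adjK m n (A : 'M[C]_(m, n)) : adj (adj A) = A.
Proof. by apply/matrixP => i j; rewrite !mxE conjCK. Qed.

Lemma adjM m n p (A : 'M[C]_(m, n)) (B : 'M[C]_(n, p)) :
  adj (A *m B) = adj B *m adj A.
Proof.
apply/matrixP => i j; rewrite !mxE rmorph_sum; apply: eq_bigr => k _.
by rewrite !mxE rmorphM mulrC.
Qed.

Lemma adjD m n (A B : 'M[C]_(m, n)) : adj (A + B) = adj A + adj B.
Proof. by apply/matrixP => i j; rewrite !mxE rmorphD. Qed.

Lemma adjN m n (A : 'M[C]_(m, n)) : adj (- A) = - adj A.
Proof. by apply/matrixP => i j; rewrite !mxE rmorphN. Qed.

Lemma adjB m n (A B : 'M[C]_(m, n)) : adj (A - B) = adj A - adj B.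
Proof. by rewrite adjD adjN. Qed.

Lemma adjZ m n c (A : 'M[C]_(m, n)) : adj (c *: A) = c^* *: adj A.
Proof. by apply/matrixP => i j; rewrite !mxE rmorphM. Qed.

Lemma adj0 m n : adj (0 : 'M[C]_(m, n)) = 0.
Proof. by apply/matrixP => i j; rewrite !mxE rmorph0. Qed.

Lemma adj_sum m n (I : finType) (F : I -> 'M[C]_(m, n)) :
  adj (\sum_i F i) = \sum_i adj (F i).
Proof.
elim/big_rec2: _ => [|i y1 y2 _ <-]; first by rewrite adj0.
by rewrite adjD.
Qed.

Lemma adj_scalar n c : adj (c%:M : 'M[C]_n) = (c^*)%:M.
Proof.
by apply/matrixP => i j; rewrite !mxE rmorphMn eq_sym.
Qed.

Lemma adj_delta m n (i : 'I_m) (j : 'I_n) :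
  adj (delta_mx i j : 'M[C]_(m, n)) = delta_mx j i.
Proof.
apply/matrixP => x y; rewrite !mxE.
by case: (y == i); case: (x == j); rewrite /= ?rmorph1 ?rmorph0.
Qed.


Definition qf d (D : 'M[C]_d) (x y : 'cV[C]_d) : C := (adj x *m D *m y) 0 0.

Lemma qf_expand d (D : 'M[C]_d) x y c :
  qf D (x + c *: y) (x + c *: y) =
  qf D x x + c * qf D x y + c^* * qf D y x + c^* * c * qf D y y.
Proof.
rewrite /qf adjD adjZ !mulmxDl !mulmxDr -!scalemxAl -!scalemxAr !mxE.
ring.
Qed.

Lemma qf_delta d (D : 'M[C]_d) i j : qf D (delta_mx i 0) (delta_mx j 0) = D i j.
Proof. by rewrite /qf adj_delta -rowE -colE !mxE. Qed.

Lemma psd_adj d (D : 'M[C]_d) : psd D -> adj D = D.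
Proof.
move=> hD.
have re v : (qf D v v)^* = qf D v v by apply: geC0_conj; apply: hD.
have key x y : qf D x y = (qf D y x)^*.
  have h1 := re (x + 1 *: y); rewrite qf_expand in h1; rewrite !rmorphD !rmorphM !rmorph1 /= !re in h1.
  have h2 := re (x + 'i *: y); rewrite qf_expand in h2; rewrite !rmorphD !rmorphM /= !re conjCi in h2.
  rewrite rmorphN /= conjCi opprK in h2.
  set a := qf D x y in h1 h2 *; set b := qf D y x in h1 h2 *.
  set qx := qf D x x in h1 h2; set qy := qf D y y in h1 h2.
  have ii : 'i * 'i = -1 :> C by rewrite -expr2 sqrCi.
  have e1 : a^* + b^* = a + b.
    by apply/eqP; rewrite -(subr_eq0) ; apply/eqP; move: h1 => /eqP; rewrite -subr_eq0 => /eqP <-; ring.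
  have e2 : 'i * (b^* - a^*) = 'i * (a - b).
    apply/eqP; rewrite -(subr_eq0); apply/eqP; move: h2 => /eqP; rewrite -subr_eq0 => /eqP <-.
    ring.
  have e3 : b^* - a^* = a - b by apply: (mulfI (neq0Ci C)).
  suff /eqP : a *+ 2 = b^* *+ 2 by rewrite eqrMn2r => /eqP.
  apply/eqP; rewrite -subr_eq0; apply/eqP.
  have -> : a *+ 2 - b^* *+ 2 = (a + b - (a^* + b^*)) + (a - b - (b^* - a^*)) by ring.
  by rewrite e1 e3 !subrr addr0.
by apply/matrixP => i j; rewrite !mxE -[RHS]qf_delta key qf_delta.
Qed.


Lemma psd_conj d (P X : 'M[C]_d) : psd X -> psd (adj P *m X *m P).
Proof. by move=> h v; have := h (P *m v); rewrite adjM !mulmxA. Qed.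

Lemma psd_diag d (s : 'rV[C]_d) : (forall k, 0 <= s 0 k) -> psd (diag_mx s).
Proof.
move=> h v; rewrite mul_mx_diag !mxE; apply: sumr_ge0 => k _; rewrite !mxE.
have -> : (v k 0)^* * s 0 k * v k 0 = s 0 k * (v k 0 * (v k 0)^*) by ring.
by apply: mulr_ge0; [apply: h | apply: mul_conjC_ge0].
Qed.

Lemma adjE m n (A : 'M[C]_(m, n)) : adj A = map_mx Num.conj A^T.
Proof. by apply/matrixP => i j; rewrite !mxE. Qed.

Lemma spectral_psd d (H : 'M[C]_d) : psd H ->
  exists (P : 'M[C]_d) (s : 'rV[C]_d),
    [/\ adj P *m P = 1%:M, P *m adj P = 1%:M, H = adj P *m diag_mx s *m P
      & forall k, 0 <= s 0 k].
Proof.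
move=> hH; have hA := psd_adj hH.
have nH : H \is normalmx by apply/normalmxP; rewrite -adjE hA.
have U := spectral_unitarymx H.
have eP : adj (spectralmx H) = invmx (spectralmx H).
  by rewrite adjE (invmx_unitary U).
have e1 : spectralmx H *m adj (spectralmx H) = 1%:M.
  by rewrite eP mulmxV // spectral_unit.
have e2 : adj (spectralmx H) *m spectralmx H = 1%:M.
  by rewrite eP mulVmx // spectral_unit.
have eH : H = adj (spectralmx H) *m diag_mx (spectral_diag H) *m spectralmx H.
  by rewrite eP; apply/orthomx_spectralP.
exists (spectralmx H), (spectral_diag H); split => // k.
have := hH (adj (spectralmx H) *m delta_mx k 0).
rewrite adjM adjK adj_delta {2}eH !mulmxA.
rewrite -(mulmxA _ (spectralmx H)) e1 mulmx1.
rewrite -(mulmxA _ (spectralmx H) (adj _)) e1 mulmx1.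
by rewrite -adj_delta -/(qf _ _ _) qf_delta mxE eqxx mulr1n.
Qed.

Lemma psd_sqrt d (H : 'M[C]_d) : psd H -> exists D, psd D /\ D *m D = H.
Proof.
move=> /spectral_psd [P [s [e1 e2 eH hs]]].
exists (adj P *m diag_mx (\row_k sqrtC (s 0 k)) *m P); split.
  by apply: psd_conj; apply: psd_diag => k; rewrite mxE sqrtC_ge0.
rewrite eH !mulmxA -(mulmxA _ P) e2 mulmx1 -(mulmxA (adj P)) mulmx_diag.
congr (_ *m diag_mx _ *m _); apply/matrixP => i k; rewrite !mxE -expr2 sqrtCK ord1 //.
Qed.

Lemma psd_bound d (H : 'M[C]_d) : psd H ->
  exists c : C, 0 <= c /\ forall c', c <= c' -> psd (c'%:M - H).
Proof.
move=> /spectral_psd [P [s [e1 e2 eH hs]]].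
exists (\sum_k s 0 k); split; first by apply: sumr_ge0.
move=> c' hc'.
have -> : c'%:M - H = adj P *m diag_mx (\row_k (c' - s 0 k)) *m P.
  rewrite eH.
  have -> : (c'%:M : 'M[C]_d) = adj P *m c'%:M *m P by rewrite mul_mx_scalar -scalemxAl e1 scalemx1.
  rewrite -mulmxBl -mulmxBr; congr (_ *m _ *m _).
  by apply/matrixP => i j; rewrite !mxE mulrnBl.
apply: psd_conj; apply: psd_diag => k; rewrite mxE subr_ge0.
apply: le_trans hc'; rewrite (bigD1 k) //= lerDl; apply: sumr_ge0 => *; apply: hs.
Qed.


Lemma kraus_fin d (T : finType) (F : T -> 'M[C]_d) :
  exists n (K : 'I_n -> 'M[C]_d), forall rho,
    kraus K rho = \sum_t F t *m rho *m adj (F t).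
Proof.
exists #|T|, (fun i => F (enum_val i)) => rho; rewrite /kraus.
rewrite -(big_enum_val (A := T) (fun t => F t *m rho *m adj (F t))).
by apply: eq_bigl => t; rewrite inE.
Qed.

Lemma kraus_cat d n m (K : 'I_n -> 'M[C]_d) (K' : 'I_m -> 'M[C]_d) :
  exists n' (G : 'I_n' -> 'M[C]_d), forall rho,
    kraus G rho = kraus K rho + kraus K' rho.
Proof.
exists (n + m)%N, (fun i => match split i with inl j => K j | inr j => K' j end).
move=> rho; rewrite /kraus big_split_ord /=.
congr (_ + _); apply: eq_bigr => j _.
  by have /= -> := unsplitK (inl _ j).
by have /= -> := unsplitK (inr _ j).
Qed.

Lemma kraus_one d (D : 'M[C]_d) rho :
  kraus (fun _ : 'I_1 => D) rho = D *m rho *m adj D.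
Proof. by rewrite /kraus big_ord1. Qed.

Lemma kraus_scale d n (K : 'I_n -> 'M[C]_d) c rho : 0 <= c ->
  c *: kraus K rho = kraus (fun j => sqrtC c *: K j) rho.
Proof.
move=> hc; rewrite /kraus scaler_sumr; apply: eq_bigr => j _.
rewrite adjZ -!scalemxAl -scalemxAr scalerA geC0_conj ?sqrtC_ge0 //.
by rewrite -expr2 sqrtCK.
Qed.

Lemma trE d (X : 'M[C]_d) i j : \tr (X *m delta_mx j i) = X i j.
Proof.
rewrite -(mul_delta_mx (0 : 'I_1) j i) (mulmxA X) mxtrace_mulC -colE -rowE.
by rewrite trace_mx11 !mxE.
Qed.

Lemma tr_id d (X : 'M[C]_d) : (forall rho, \tr (X *m rho) = \tr rho) -> X = 1%:M.
Proof.
move=> h; apply/matrixP => i j.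
by rewrite -trE h -[delta_mx j i]mul1mx trE.
Qed.

Lemma tr_kraus d n (K : 'I_n -> 'M[C]_d) rho :
  \tr (kraus K rho) = \tr ((\sum_j adj (K j) *m K j) *m rho).
Proof.
rewrite /kraus !raddf_sum mulmx_suml raddf_sum /=; apply: eq_bigr => j _.
by rewrite mxtrace_mulC !mulmxA.
Qed.


Lemma scalar_mxD' d (a b : C) : ((a + b)%:M : 'M[C]_d) = a%:M + b%:M.
Proof. by apply/matrixP => i j; rewrite !mxE mulrnDl. Qed.

Lemma CPTP_of d k (F : 'I_k -> 'M[C]_d) D c : 0 < c -> adj D = D ->
  (\sum_j adj (F j) *m F j) + D *m D = c%:M ->
  CPTP (fun rho => c^-1 *: (kraus F rho + D *m rho *m adj D)).
Proof.
move=> hc hD hS; split.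
  have [n' [G hG]] := kraus_cat F (fun _ : 'I_1 => D).
  exists n', (fun j => sqrtC c^-1 *: G j) => rho.
  by rewrite -kraus_scale ?invr_ge0 ?ltW // hG kraus_one.
move=> rho; rewrite linearZ /= -(kraus_one D) raddfD /= !tr_kraus.
rewrite -raddfD /= -mulmxDl big_ord1 hD hS mul_scalar_mx linearZ /=.
by rewrite mulKf // gt_eqF.
Qed.

Lemma part3 d n m (Sigma : 'M[C]_d -> 'M[C]_d) (K : 'I_n -> 'M[C]_d)
  (M : 'I_m -> 'M[C]_d) (q : C) :
  trace_preserving Sigma -> (forall rho, Sigma rho = kraus K rho - kraus M rho) ->
  0 < q -> forall D, psd D -> D *m D = q%:M - \sum_(j < m) adj (M j) *m M j ->
  CPTP (fun rho => (1 + q)^-1 *: (kraus K rho + D *m rho *m adj D)) /\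
  CPTP (fun rho => q^-1 *: (kraus M rho + D *m rho *m adj D)) /\
  forall rho, Sigma rho = (1 + q) *: ((1 + q)^-1 *: (kraus K rho + D *m rho *m adj D))
                        - q *: (q^-1 *: (kraus M rho + D *m rho *m adj D)).
Proof.
move=> TP hS hq D hD hDD.
have hA := psd_adj hD.
set SK := \sum_(j < n) adj (K j) *m K j.
set SM := \sum_(j < m) adj (M j) *m M j.
have e : SK - SM = 1%:M.
  apply: tr_id => rho; rewrite mulmxBl linearB /= -!tr_kraus -linearB /=.
  by rewrite -hS TP.
have eK : SK = SM + 1%:M by rewrite -e addrC subrK.
have hq1 : 0 < 1 + q by rewrite addr_gt0 ?ltr01.
split; first apply: CPTP_of => //.
  by rewrite -/SK hDD eK scalar_mxD' addrC addrA subrK addrC.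
split; first apply: CPTP_of => //.
  by rewrite -/SM hDD addrC subrK.
move=> rho; rewrite !scalerA !mulfV ?gt_eqF // !scale1r hS.
by rewrite opprD addrACA subrr addr0.
Qed.


Lemma polar d (A B rho : 'M[C]_d) w :
  (A + w *: B) *m rho *m adj (A + w *: B) - (A - w *: B) *m rho *m adj (A - w *: B)
  = 2%:R *: (w^* *: (A *m rho *m adj B) + w *: (B *m rho *m adj A)).
Proof.
rewrite adjD adjB adjZ !(mulmxDl, mulmxBl, mulmxDr, mulmxBr, mulNmx, mulmxN) -!(scalemxAl, scalemxAr).
move: (A *m rho *m adj A) (A *m rho *m adj B) (B *m rho *m adj A) (B *m rho *m adj B) => t1 t2 t3 t4.
apply/matrixP => i j; rewrite !mxE; ring.
Qed.


Lemma delta_sand d (i k l j : 'I_d) (rho : 'M[C]_d) :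
  delta_mx i k *m rho *m delta_mx l j = rho k l *: delta_mx i j.
Proof.
rewrite -(mul_delta_mx (0 : 'I_1) i k) -(mul_delta_mx (0 : 'I_1) l j).
rewrite !mulmxA -(mulmxA (delta_mx i 0)) -(mulmxA (delta_mx i 0)).
rewrite -rowE -colE [col _ _]mx11_scalar mul_mx_scalar -scalemxAl.
by rewrite mul_delta_mx !mxE.
Qed.

Lemma lin_props d (S : 'M[C]_d -> 'M[C]_d) : is_linear_map S ->
  [/\ S 0 = 0, forall x y, S (x + y) = S x + S y & forall a x, S (a *: x) = a *: S x].
Proof.
move=> hL.
have h0 : S 0 = 0.
  by have := hL 1 0 0; rewrite scale1r addr0 scale1r => /esym/eqP; rewrite -subr_eq0 addrK => /eqP.
split => //.
  by move=> x y; have := hL 1 x y; rewrite !scale1r.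
by move=> a x; rewrite -[a *: x]addr0 hL h0 addr0.
Qed.

Lemma lin_sum d (S : 'M[C]_d -> 'M[C]_d) (I : finType) (F : I -> 'M[C]_d) :
  is_linear_map S -> S (\sum_i F i) = \sum_i S (F i).
Proof.
move=> /lin_props [h0 hD _].
by elim/big_rec2: _ => [|i y1 y2 _ <-]; rewrite ?h0 ?hD.
Qed.


Lemma sum4 (V : nmodType) d (f : ('I_d * 'I_d) * ('I_d * 'I_d) -> V) :
  \sum_t f t = \sum_i \sum_k \sum_j \sum_l f ((i, k), (j, l)).
Proof.
rewrite pair_bigA /=.
rewrite [RHS](eq_bigr (fun a => \sum_b f (a, b))); last first.
  by move=> [i k] _; rewrite pair_bigA; apply: eq_bigr => [[j l]].
by rewrite pair_bigA; apply: eq_bigr => [[a b]].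
Qed.

Definition Xm d (a : 'I_d * 'I_d) : 'M[C]_d := delta_mx a.1 a.2.
Definition Cf d (S : 'M[C]_d -> 'M[C]_d) (a b : 'I_d * 'I_d) := S (delta_mx a.2 b.2) a.1 b.1.

Lemma repr d (S : 'M[C]_d -> 'M[C]_d) : is_linear_map S -> forall rho,
  S rho = \sum_t Cf S t.1 t.2 *: (Xm t.1 *m rho *m adj (Xm t.2)).
Proof.
move=> hL rho; have [h0 hD hZ] := lin_props hL.
rewrite sum4 /Cf /Xm /=.
under eq_bigr => i _ do under eq_bigr => k _ do under eq_bigr => j _ do
  under eq_bigr => l _ do rewrite adj_delta delta_sand scalerA.
have -> : S rho = \sum_k \sum_l rho k l *: S (delta_mx k l).
  rewrite {1}(matrix_sum_delta rho) (lin_sum _ hL); apply: eq_bigr => k _.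
  by rewrite (lin_sum _ hL); apply: eq_bigr => l _; rewrite hZ.
rewrite [RHS]exchange_big; apply: eq_bigr => k _.
under [RHS]eq_bigr => i _ do rewrite exchange_big.
rewrite [RHS]exchange_big; apply: eq_bigr => l _.
rewrite {1}[S _]matrix_sum_delta scaler_sumr; apply: eq_bigr => i _.
rewrite scaler_sumr; apply: eq_bigr => j _.
by rewrite scalerA mulrC.
Qed.


Lemma part2 d (S : 'M[C]_d -> 'M[C]_d) : is_linear_map S -> herm_preserving S ->
  exists n m (K : 'I_n -> 'M[C]_d) (M : 'I_m -> 'M[C]_d),
    forall rho, S rho = kraus K rho - kraus M rho.
Proof.
move=> hL hH.
pose w t := (Cf S t.1 t.2)^*.
pose Fp (t : ('I_d * 'I_d) * ('I_d * 'I_d)) := Xm t.1 + w t *: Xm t.2.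
pose Fm (t : ('I_d * 'I_d) * ('I_d * 'I_d)) := Xm t.1 - w t *: Xm t.2.
have [n [K0 hK0]] := kraus_fin Fp.
have [m [M0 hM0]] := kraus_fin Fm.
have two0 : (2%:R : C) != 0 by rewrite pnatr_eq0.
pose c : C := (2%:R * 2%:R)^-1.
have hc : 0 <= c by rewrite invr_ge0 mulr_ge0 ?ler0n.
exists n, m, (fun j => sqrtC c *: K0 j), (fun j => sqrtC c *: M0 j) => rho.
rewrite -!kraus_scale // hK0 hM0 -scalerBr -sumrB.
under eq_bigr => t _ do rewrite polar conjCK.
rewrite -scaler_sumr big_split /= scalerA.
have e1 := repr hL rho.
have e2 : S rho = \sum_t (Cf S t.1 t.2)^* *: (Xm t.2 *m rho *m adj (Xm t.1)).
  rewrite -[rho]adjK hH (repr hL) adj_sum; apply: eq_bigr => t _.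
  by rewrite adjZ !adjM adjK mulmxA.
rewrite -e1 -e2 -mulr2n -scaler_nat scalerA /c -mulrA mulVf ?scale1r //.
by rewrite mulf_neq0.
Qed.


Lemma psd_gram d m (M : 'I_m -> 'M[C]_d) : psd (\sum_j adj (M j) *m M j).
Proof.
move=> v; rewrite mulmx_sumr mulmx_suml summxE; apply: sumr_ge0 => j _.
have -> : adj v *m (adj (M j) *m M j) *m v = adj (M j *m v) *m (M j *m v).
  by rewrite adjM !mulmxA.
rewrite !mxE; apply: sumr_ge0 => k _; rewrite !mxE mulrC; apply: mul_conjC_ge0.
Qed.

End Gen.

Local Open Scope complex_scope.
Local Open Scope ring_scope.

Theorem mainTheorem1 (R : realType) (d : nat)
    (Sigma : 'M[R[i]]_d -> 'M[R[i]]_d) :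
  (0 < d)%N ->
  is_linear_map Sigma -> trace_preserving Sigma -> herm_preserving Sigma ->
  (* Sigma = (1+p) Lambda_+ - p Lambda_- with CPTP Lambda_+-, p > 0 *)
  (exists p : R, 0 < p /\
     exists Lp Lm : 'M[R[i]]_d -> 'M[R[i]]_d,
       CPTP Lp /\ CPTP Lm /\
       forall rho, Sigma rho = (1 + p)%:C *: Lp rho - p%:C *: Lm rho)
  /\
  (* Sigma is a difference of two Kraus sums *)
  (exists (n m : nat) (K : 'I_n -> 'M[R[i]]_d) (M : 'I_m -> 'M[R[i]]_d),
     forall rho, Sigma rho = kraus K rho - kraus M rho)
  /\
  (* explicit construction for any such families and any admissible p *)
  (forall (n m : nat) (K : 'I_n -> 'M[R[i]]_d) (M : 'I_m -> 'M[R[i]]_d),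
     (forall rho, Sigma rho = kraus K rho - kraus M rho) ->
     forall p : R, 0 < p ->
     loewner (\sum_(j < m) adj (M j) *m M j) (p%:C)%:M ->
     (* the PSD square root D of p I - sum_j M_j^dagger M_j exists ... *)
     (exists D : 'M[R[i]]_d, psd D /\
        D *m D = (p%:C)%:M - \sum_(j < m) adj (M j) *m M j)
     /\
     (* ... and, D being that square root, the maps below are CPTP and decompose Sigma *)
     (forall D : 'M[R[i]]_d, psd D ->
        D *m D = (p%:C)%:M - \sum_(j < m) adj (M j) *m M j ->
        let Lp := fun rho => ((1 + p)%:C)^-1 *: (kraus K rho + D *m rho *m adj D) in
        let Lm := fun rho => (p%:C)^-1 *: (kraus M rho + D *m rho *m adj D) in
        CPTP Lp /\ CPTP Lm /\
        forall rho, Sigma rho = (1 + p)%:C *: Lp rho - p%:C *: Lm rho)).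
Proof.
move=> d0 hL TP hH.
have P2 := part2 hL hH.
have P3 : forall (n m : nat) (K : 'I_n -> 'M[R[i]]_d) (M : 'I_m -> 'M[R[i]]_d),
     (forall rho, Sigma rho = kraus K rho - kraus M rho) ->
     forall p : R, 0 < p ->
     loewner (\sum_(j < m) adj (M j) *m M j) (p%:C)%:M ->
     (exists D : 'M[R[i]]_d, psd D /\
        D *m D = (p%:C)%:M - \sum_(j < m) adj (M j) *m M j)
     /\
     (forall D : 'M[R[i]]_d, psd D ->
        D *m D = (p%:C)%:M - \sum_(j < m) adj (M j) *m M j ->
        let Lp := fun rho => ((1 + p)%:C)^-1 *: (kraus K rho + D *m rho *m adj D) in
        let Lm := fun rho => (p%:C)^-1 *: (kraus M rho + D *m rho *m adj D) in
        CPTP Lp /\ CPTP Lm /\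
        forall rho, Sigma rho = (1 + p)%:C *: Lp rho - p%:C *: Lm rho).
  move=> n m K M hS p hp hLw; split; first exact: psd_sqrt hLw.
  move=> D hD hDD /=.
  have hq : 0 < p%:C by rewrite ltcE /= eqxx hp.
  have -> : (1 + p)%:C = 1 + p%:C by rewrite rmorphD rmorph1.
  by have := part3 TP hS hq hD hDD.
split; last by split.
have [n [m [K [M hS]]]] := P2.
have [c [hc hc']] := psd_bound (psd_gram M).
have ec : c = (complex.Re c)%:C.
  by rewrite [LHS]complexE ger0_Im // mulr0 addr0.
have hRe : 0 <= complex.Re c by move: hc; rewrite lecE => /andP [_].
pose p := complex.Re c + 1.
have hp : 0 < p by rewrite /p; lra.
have hpc : p%:C = c + 1 by rewrite /p rmorphD rmorph1 /= -ec.
have hLw : loewner (\sum_(j < m) adj (M j) *m M j) (p%:C)%:M.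
  by apply: hc'; rewrite hpc lerDl ler01.
have [[D [hD hDD]] H] := P3 n m K M hS p hp hLw.
have [h1 [h2 h3]] := H D hD hDD.
exists p; split => //.
by exists (fun rho => ((1 + p)%:C)^-1 *: (kraus K rho + D *m rho *m adj D)),
  (fun rho => (p%:C)^-1 *: (kraus M rho + D *m rho *m adj D)).
Qed.
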